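(* Let $a$ be a positive integer with $\sigma(a)\neq 2a$, and let $b,c$ be coprime integers with $c>0$ and $\dfrac{b}{c}=\dfrac{a}{2a-\sigma(a)}$. Let $x,y$ be positive integers such that $p=x-1$, $q=y-1$ and $r=xy-1$ are primes, $p\neq q$, and none of $p,q,r$ divides $a$. If $(cx-b)(cy-b)=b^2$, then $a(x-1)(y-1)$ and $a(xy-1)$ are amicable numbers.
   Context: For a positive integer $N$, $\sigma(N)$ denotes the sum of all positive divisors of $N$. Positive integers $M,N$ are amicable if $\sigma(M)-M=N$ and $\sigma(N)-N=M$. *)

(* Defs.v *)
From mathcomp Require Import all_boot all_order all_algebra.
Set Implicit Arguments. Unset Strict Implicit. Unset Printing Implicit Defensive.

Definition sigma (N : nat) : nat := \sum_(d <- divisors N) d.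

Definition amicable (M N : nat) : Prop :=
  0 < M /\ 0 < N /\ sigma M - M = N /\ sigma N - N = M.

(* Main.v *)
Require Import Defs.
From mathcomp Require Import all_boot all_order all_algebra zify ring lra.
Import Order.TTheory GRing.Theory Num.Theory.

Lemma sigmaM_prime m p : 0 < m -> prime p -> ~~ (p %| m) -> sigma (m * p) = sigma m * p.+1.
Proof.
move=> m0 pp npm.
have p0 := prime_gt0 pp.
have mp0 : 0 < m * p by rewrite muln_gt0 m0 p0.
have Hperm : perm_eq (divisors (m * p)) (divisors m ++ map (muln p) (divisors m)).
  apply: uniq_perm; first exact: divisors_uniq.
    rewrite cat_uniq divisors_uniq /= (map_inj_uniq (fun u v (E : p * u = p * v) => etrans (esym (mulKn u p0)) (etrans (congr1 (divn^~ p) E) (mulKn v p0)))) divisors_uniq andbT.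
    apply/hasPn => e /mapP [d dm ->].
    rewrite -dvdn_divisors // ; apply/negP => H; apply: (negP npm).
    exact: dvdn_trans (dvdn_mulr _ _) H.
  move=> e; rewrite mem_cat -!dvdn_divisors //.
  apply/idP/idP.
    move=> He; case: (boolP (p %| e)) => pe.
      apply/orP; right; apply/mapP; exists (e %/ p).
        rewrite -dvdn_divisors //; rewrite -(dvdn_pmul2l p0) mulnC divnK // mulnC //.
      by rewrite mulnC divnK.
    apply/orP; left; have ce : coprime e p by rewrite coprime_sym (prime_coprime _ pp).
    by rewrite -(Gauss_dvdr m ce) mulnC.
  case/orP => [H|/mapP [d dm ->]]; first exact: dvdn_mulr.
  by rewrite mulnC dvdn_pmul2r // dvdn_divisors.
rewrite /sigma (perm_big _ Hperm) big_cat big_map /= -big_distrr /=.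
by rewrite mulnS mulnC addnC.
Qed.

Theorem mainTheorem4 (a : nat) (b : int) (c : int) (x y : nat) :
  (0 < a)%N -> sigma a <> (2 * a)%N ->
  gcdz b c = 1 -> (0 < c)%R ->
  (b%:~R / c%:~R : rat) = (a%:R / (2 * a%:R - (sigma a)%:R))%R ->
  (0 < x)%N -> (0 < y)%N ->
  prime (x - 1) -> prime (y - 1) -> prime (x * y - 1) ->
  (x - 1)%N <> (y - 1)%N ->
  ~~ ((x - 1) %| a)%N -> ~~ ((y - 1) %| a)%N -> ~~ ((x * y - 1) %| a)%N ->
  ((c * x%:Z - b) * (c * y%:Z - b) = b ^+ 2)%R ->
  amicable (a * (x - 1) * (y - 1)) (a * (x * y - 1)).
Proof.
move=> a0 sa _ c0 Hr x0 y0 pp pq pr pne npa nqa nra Hc.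
set s := sigma a in sa Hr *.
have cn0 : (c%:~R : rat) != 0%R by rewrite intr_eq0 gt_eqF.
have dn0 : (2 * a%:R - s%:R : rat) != 0%R.
  rewrite subr_eq0; apply/eqP => E; apply: sa.
  by apply/eqP; rewrite eq_sym -(eqr_nat rat) natrM E.
move/eqP: Hr; rewrite eqr_div // => /eqP Hr.
have Hz : (b * (2 * a%:Z - s%:Z) = a%:Z * c)%R.
  apply: (@intr_inj rat).
  by rewrite !rmorphM !rmorphB /= !rmorphM /= !pmulrn.
have cnz : c != 0%R by rewrite gt_eqF.
have H0 : (c * (c * ((2 * a%:Z - s%:Z) * x%:Z * y%:Z - a%:Z * (x%:Z + y%:Z)))
   = (2 * a%:Z - s%:Z) * ((c * x%:Z - b) * (c * y%:Z - b) - b ^+ 2)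
     + c * (x%:Z + y%:Z) * (b * (2 * a%:Z - s%:Z) - a%:Z * c))%R by ring.
rewrite Hc Hz !subrr !mulr0 addr0 in H0.
move/eqP: H0; rewrite !mulf_eq0 (negbTE cnz) /= subr_eq0 => /eqP H1.
have E : (s * x * y + a * (x + y) = 2 * a * x * y)%N.
  apply/eqP; rewrite -eqz_nat; apply/eqP.
  rewrite !PoszD !PoszM PoszD.
  have -> : (2%Z * a%:Z * x%:Z * y%:Z = (2 * a%:Z - s%:Z) * x%:Z * y%:Z + s%:Z * x%:Z * y%:Z)%R by ring.
  by rewrite H1; ring.
clear Hc Hz H1 Hr cn0 dn0 cnz c0.
case: x x0 pp pne npa pr nra E => [//|p] _ pp pne npa pr nra E.
case: y y0 pq nqa pne pr nra E => [//|q] _ pq nqa pne pr nra E.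
have hr : p.+1 * q.+1 - 1 = p * q + p + q by clear -p q; rewrite mulSn mulnS; lia.
rewrite hr !subSS !subn0 in pp pq pne npa nqa pr nra *.
have p0 := prime_gt0 pp; have q0 := prime_gt0 pq.
have nqp : ~~ (q %| a * p) by rewrite Euclid_dvdM // negb_or nqa dvdn_prime2 // eq_sym; apply/eqP.
have S1 : sigma (a * p * q) = s * p.+1 * q.+1 by rewrite sigmaM_prime ?sigmaM_prime // muln_gt0 a0.
have S2 : sigma (a * (p * q + p + q)) = s * (p * q + p + q).+1 by rewrite sigmaM_prime.
split; first by rewrite !muln_gt0 a0 p0.
split; first by rewrite muln_gt0 a0 addn_gt0 q0 orbT.
rewrite S1 S2; clear -E; split; nia.
Qed.
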